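(* Let $S=\{A,B\}$ be a two-element set and let $s,s':I_m\to S$ be mirrored. Then $s=s'$ or $s=\mathrm{rev}\,s'$.
   Context: $\mathscr{T}_m=\{\sigma\in\mathcal{S}_m \mid \exists t:\ \sigma(1)>\cdots>\sigma(t)=1,\ \sigma(t)<\cdots<\sigma(m)\}$, $\mathcal{S}_m$ acting on sequences $s:I_m\to S$ by $\sigma s=s\circ\sigma^{-1}$. $\mathrm{rev}\,s$ is the reversed sequence, $(\mathrm{rev}\,s)(i)=s(m+1-i)$. Two sequences $s,s'$ are mirrored if for every $\sigma\in\mathscr{T}_m$ there is $\sigma'\in\mathscr{T}_m$ with $\sigma s=\sigma's'$, and for every $\tau'\in\mathscr{T}_m$ there is $\tau\in\mathscr{T}_m$ with $\tau's'=\tau s$. *)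

(* Defs.v *)
(* Indices I_m = {1..m} are rendered 0-based as 'I_m. *)
From mathcomp Require Import all_boot all_fingroup.
Set Implicit Arguments. Unset Strict Implicit. Unset Printing Implicit Defensive.

Definition in_T (m : nat) (sigma : {perm 'I_m}) : Prop :=
  exists t : 'I_m,
    [/\ val (sigma t) = 0,
        (forall i j : 'I_m, i < j -> j <= t -> sigma j < sigma i)
      & (forall i j : 'I_m, t <= i -> i < j -> sigma i < sigma j)].

Definition act_seq (m : nat) (S : Type) (sigma : {perm 'I_m}) (s : 'I_m -> S)
  : 'I_m -> S := fun i => s ((sigma^-1)%g i).

Definition rev_seq (m : nat) (S : Type) (s : 'I_m -> S) : 'I_m -> S :=
  fun i => s (rev_ord i).

Definition mirrored (m : nat) (S : Type) (s s' : 'I_m -> S) : Prop :=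
  (forall sigma, in_T sigma -> exists sigma', in_T sigma' /\
      act_seq sigma s = act_seq sigma' s') /\
  (forall tau', in_T tau' -> exists tau, in_T tau /\
      act_seq tau' s' = act_seq tau s).

(* Main.v *)
Require Import Defs.
From mathcomp Require Import all_boot all_fingroup.
From mathcomp Require Import zify.
From Stdlib Require Import FunctionalExtensionality.
Set Implicit Arguments. Unset Strict Implicit. Unset Printing Implicit Defensive.

Inductive peel {T : Type} : seq T -> seq T -> Prop :=
| peel_nil : peel [::] [::]
| peel_l x l w : peel l w -> peel (x :: l) (x :: w)
| peel_r x l w : peel l w -> peel (rcons l x) (x :: w).

Lemma peel_refl T (l : seq T) : peel l l.
Proof. elim: l => [|x l IH]; by constructor. Qed.

Lemma peel_rev T (l : seq T) : peel l (rev l).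
Proof.
elim/last_ind: l => [|l x IH]; first by constructor.
by rewrite rev_rcons; constructor.
Qed.

Lemma peel_revl T (l w : seq T) : peel l w -> peel (rev l) w.
Proof.
elim=> [|x l0 w0 _ IH|x l0 w0 _ IH]; first by constructor.
- by rewrite rev_cons; constructor.
- by rewrite rev_rcons; constructor.
Qed.

Lemma peel_rev_iff T (l w : seq T) : peel (rev l) w <-> peel l w.
Proof. split; last exact: peel_revl. by move/peel_revl; rewrite revK. Qed.

Lemma peel_nil_inv T (l : seq T) : peel l [::] -> l = [::].
Proof. by move=> H; inversion H. Qed.

Lemma peel_cons_inv T (l : seq T) x w : peel l (x :: w) ->
  (exists l0, l = x :: l0 /\ peel l0 w) \/ (exists l0, l = rcons l0 x /\ peel l0 w).
Proof.
move=> H; inversion H; subst; [left|right]; by eexists; split; eauto.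
Qed.

Lemma nseqSr T (x : T) n : nseq n.+1 x = rcons (nseq n x) x.
Proof. by elim: n => //= n ->. Qed.

Lemma peel_nseq T (x : T) n w : peel (nseq n x) w -> w = nseq n x.
Proof.
suff P: forall l w, peel l w -> forall n, l = nseq n x -> w = nseq n x.
  by move=> H; exact: P _ _ H n erefl.
move=> {n w} l w; elim=> [|y l0 w0 _ IH|y l0 w0 _ IH] [|n] //.
- by case=> -> /IH ->.
- by case: l0 {IH}.
- rewrite nseqSr => /rcons_inj [E1 E2]. rewrite (IH _ E1) E2. by rewrite -nseqSr.
Qed.

Lemma peel_catl T (p l w : seq T) : peel l w -> peel (p ++ l) (p ++ w).
Proof. elim: p => //= x p IH H; constructor; exact: IH. Qed.

Lemma peel_catr T (x : T) b (l w : seq T) : peel l w -> peel (l ++ nseq b x) (nseq b x ++ w).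
Proof.
elim: b => [|b IH] H; first by rewrite cats0.
have -> : l ++ nseq b.+1 x = rcons (l ++ nseq b x) x by rewrite nseqSr -cats1 catA cats1.
by constructor; exact: IH.
Qed.

Lemma cons_eq_X (T : eqType) (X x : T) a u b l0 :
  head X u != X -> x :: l0 = nseq a X ++ u ++ nseq b X ->
  exists a', a = a'.+1 /\ x = X /\ l0 = nseq a' X ++ u ++ nseq b X \/ (a = 0 /\ x = head X u /\ l0 = behead u ++ nseq b X).
Proof.
case: a => [|a] /= hu.
  case: u hu => [|y u] /=; first by rewrite eqxx.
  by move=> _ [-> ->]; exists 0; right.
by case=> -> ->; exists a; left.
Qed.

Lemma rcons_eq_X (T : eqType) (X x : T) a u b l0 :
  last X u != X -> rcons l0 x = nseq a X ++ u ++ nseq b X ->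
  (exists b', b = b'.+1 /\ x = X /\ l0 = nseq a X ++ u ++ nseq b' X) \/
  (b = 0 /\ exists u0, u = rcons u0 x /\ l0 = nseq a X ++ u0).
Proof.
case: b => [|b] hu.
  rewrite cats0; case/lastP: u hu => [|u y]; first by rewrite /= eqxx.
  rewrite last_rcons => _; rewrite -rcons_cat => /rcons_inj [-> ->].
  by right; split=> //; exists u.
have -> : nseq a X ++ u ++ nseq b.+1 X = rcons (nseq a X ++ u ++ nseq b X) X by rewrite nseqSr -!rcons_cat.
by move=> /rcons_inj [-> ->]; left; exists b.
Qed.

Section dummy. End dummy.

Lemma peel_outer (T : eqType) (X : T) u (hu : head X u != X) (hl : last X u != X) :
  forall k a b v, a + b = k ->
  peel (nseq a X ++ u ++ nseq b X) (nseq k X ++ v) -> peel u v.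
Proof.
elim=> [|k IH] a b v.
  by case: a => [|a] //; case: b => [|b] //= _; rewrite cats0.
move=> Hk /= H0; case: (peel_cons_inv H0) => [[l0 [E H]]|[l0 [E H]]].
- case: (cons_eq_X hu (esym E)) => a' [[Ea [_ El]]|[Ea [Ex _]]].
    by apply: (IH a' b) => //; [lia | rewrite -El].
  by rewrite -Ex eqxx in hu.
- case: (rcons_eq_X hl (esym E)) => [[b' [Eb [_ El]]]|[Eb [u0 [Eu _]]]].
    by apply: (IH a b') => //; [lia | rewrite -El].
  by rewrite Eu last_rcons eqxx in hl.
Qed.

Lemma peel_outer_r (T : eqType) (X : T) u a b v : peel u v ->
  peel (nseq a X ++ u ++ nseq b X) (nseq (a + b) X ++ v).
Proof.
move=> H; rewrite nseqD -catA; apply: peel_catl; exact: peel_catr.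
Qed.

Lemma peel_noX (T : eqType) (X : T) u w (hu : head X u != X) (hl : last X u != X) :
  ~ peel u (X :: w).
Proof.
move=> H0; case: (peel_cons_inv H0) => [[l0 [E _]]|[l0 [E _]]].
  by rewrite E /= eqxx in hu.
by rewrite E last_rcons eqxx in hl.
Qed.

Lemma peel_kmax (T : eqType) (X : T) u a b k v (hu : head X u != X) (hl : last X u != X) :
  peel (nseq a X ++ u ++ nseq b X) (nseq k X ++ v) -> k <= a + b.
Proof.
move=> H; rewrite leqNgt; apply/negP => Hk.
have E : nseq k X = nseq (a + b) X ++ X :: nseq (k - (a + b)).-1 X.
  by rewrite -[X :: _]/(nseq (k - (a + b)).-1.+1 X) -nseqD; congr nseq; lia.
rewrite E -catA in H.
by apply: (peel_noX (w := nseq (k - (a + b)).-1 X ++ v) hu hl); apply: (peel_outer hu hl _ H).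
Qed.

Lemma peel_min (T : eqType) (X : T) u (hu : head X u != X) (hl : last X u != X) :
  forall k a b y v, y != X ->
  peel (nseq a X ++ u ++ nseq b X) (nseq k X ++ y :: v) -> minn a b <= k.
Proof.
elim=> [|k IH] a b y v hy /=.
  move=> H0; case: (peel_cons_inv H0) => [[l0 [E _]]|[l0 [E _]]].
    case: (cons_eq_X hu (esym E)) => a' [[Ea [Ey _]]|[Ea _]].
      by rewrite Ey eqxx in hy.
    lia.
  case: (rcons_eq_X hl (esym E)) => [[b' [Eb [Ey _]]]|[Eb _]].
    by rewrite Ey eqxx in hy.
  by rewrite Eb; lia.
move=> H0; case: (peel_cons_inv H0) => [[l0 [E H]]|[l0 [E H]]].
- case: (cons_eq_X hu (esym E)) => a' [[Ea [_ El]]|[Ea [Ex _]]].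
    rewrite El in H; have := IH _ _ _ _ hy H; lia.
  by rewrite -Ex eqxx in hu.
- case: (rcons_eq_X hl (esym E)) => [[b' [Eb [_ El]]]|[Eb [u0 [Eu _]]]].
    rewrite El in H; have := IH _ _ _ _ hy H; lia.
  by rewrite Eu last_rcons eqxx in hl.
Qed.

Lemma peel_minwit (T : eqType) (X : T) u a b (hu : head X u != X) (hl : last X u != X) :
  exists y v, y != X /\ peel (nseq a X ++ u ++ nseq b X) (nseq (minn a b) X ++ y :: v).
Proof.
case: (leqP a b) => Hab.
  case: u hu hl => [|y u] hu hl; first by rewrite /= eqxx in hu.
  exists y, (u ++ nseq b X); split => //; exact: peel_refl.
case/lastP: u hu hl => [|u y] hu hl; first by rewrite /= eqxx in hu.
exists y, (rev u ++ nseq a X); split; first by rewrite last_rcons in hl.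
have := peel_rev (nseq a X ++ rcons u y ++ nseq b X).
by rewrite !rev_cat !rev_nseq rev_rcons -catA.
Qed.

Lemma peel_prefix (T : eqType) (X : T) u (hu : head X u != X) :
  forall k i j z v, k <= i -> k < j -> z != X ->
  peel (nseq i X ++ u ++ nseq j X) (nseq k X ++ z :: v) ->
  i = k /\ z = head X u /\ peel (behead u ++ nseq j X) v.
Proof.
elim=> [|k IH] i j z v Hi Hj hz /=.
  move=> H0; case: (peel_cons_inv H0) => [[l0 [E H]]|[l0 [E H]]].
    case: (cons_eq_X hu (esym E)) => a' [[Ea [Ey _]]|[Ea [Ez El]]].
      by rewrite Ey eqxx in hz.
    by subst; split; [|split].
  move: E; clear H0 H; case: j Hj => [|j] // _.
  have -> : nseq i X ++ u ++ nseq j.+1 X = rcons (nseq i X ++ u ++ nseq j X) X by rewrite nseqSr -!rcons_cat.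
  by move/rcons_inj => [_ Ez]; rewrite Ez eqxx in hz.
move=> H0; case: (peel_cons_inv H0) => [[l0 [E H]]|[l0 [E H]]].
- case: (cons_eq_X hu (esym E)) => a' [[Ea [_ El]]|[Ea _]].
    rewrite El in H; have Hi' : k <= a' by lia.
    have Hj' : k < j by lia.
    have [? ?] := IH a' j z v Hi' Hj' hz H; split => //; lia.
  lia.
- move: E; clear H0; case: j Hj => [|j] // Hj.
  have -> : nseq i X ++ u ++ nseq j.+1 X = rcons (nseq i X ++ u ++ nseq j X) X by rewrite nseqSr -!rcons_cat.
  move=> E1; have El := congr1 fst (rcons_inj E1); rewrite /= in El; rewrite -El in H.
  have Hi' : k <= i by lia.
  have Hj' : k < j by lia.
  have [? ?] := IH i j z v Hi' Hj' hz H; lia.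
Qed.

Lemma peel_prefix_r (T : eqType) (X : T) u k j v (hu : head X u != X) :
  peel (behead u ++ nseq j X) v ->
  peel (nseq k X ++ u ++ nseq j X) (nseq k X ++ head X u :: v).
Proof.
case: u hu => [|y u] hu H; first by rewrite /= eqxx in hu.
apply: peel_catl => /=; constructor; exact: H.
Qed.

Lemma catIs_ (T : Type) (s1 s2 s3 : seq T) : s1 ++ s3 = s2 ++ s3 -> s1 = s2.
Proof.
move=> E; have := congr1 rev E; rewrite !rev_cat => E'.
have := congr1 (drop (size (rev s3))) E'; rewrite !drop_size_cat //.
by move/(congr1 rev); rewrite !revK.
Qed.

Lemma catsI_ (T : Type) (s1 s2 s3 : seq T) : s1 ++ s2 = s1 ++ s3 -> s2 = s3.
Proof. by move/(congr1 (drop (size s1))); rewrite !drop_size_cat. Qed.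

Lemma comm_pow (T : eqType) (X y : T) b p : 0 < b -> y != X ->
  p ++ (y :: nseq b X) = (y :: nseq b X) ++ p ->
  exists k, p = flatten (nseq k (y :: nseq b X)).
Proof.
move=> hb hy; set z := y :: nseq b X.
move: (leqnn (size p)); move: {2}(size p) => n.
elim: n p => [|n IH] p Hp E.
  by case: p Hp E => // _ _; exists 0.
case: (leqP (size z) (size p)) => Hz.
  have Tz : take (size z) p = z.
    by rewrite -(@takel_cat (size z) _ p z Hz) E take_size_cat.
  have Ep : p = z ++ drop (size z) p by rewrite -{1}(cat_take_drop (size z) p) Tz.
  have E2 : drop (size z) p ++ z = z ++ drop (size z) p.
    by apply: (@catsI_ _ z); rewrite catA -Ep.
  have Hs : size (drop (size z) p) <= n by rewrite size_drop /= in Hp *; lia.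
  have [k Ek] := IH _ Hs E2.
  by exists k.+1; rewrite Ep Ek.
case: p Hp E Hz => [|x p'] Hp E Hz; first by exists 0.
have Hb : size p' < b by rewrite /z /= size_nseq in Hz; lia.
have := congr1 (fun s => nth X s (size p').+1) E.
rewrite /z !nth_cat /= ltnn subnn /= size_nseq ltnS Hb nth_nseq Hb => Ey.
by rewrite Ey eqxx in hy.
Qed.

Lemma pow_rcons_step (T : Type) (y : T) w k :
  rcons (flatten (nseq k.+1 (y :: w))) y = rcons (flatten (nseq k (y :: w))) y ++ w ++ [:: y].
Proof.
elim: k => [|k IH]; first by rewrite /= cats0 cats1.
rewrite (_ : flatten (nseq k.+2 (y :: w)) = (y :: w) ++ flatten (nseq k.+1 (y :: w))) //.
rewrite [LHS]rcons_cat IH catA.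
by rewrite -rcons_cat -IH.
Qed.

Lemma pow_pal (T : Type) (y : T) w k : rev w = w ->
  rev (rcons (flatten (nseq k (y :: w))) y) = rcons (flatten (nseq k (y :: w))) y.
Proof.
move=> Hw; elim: k => [|k IH]; first by [].
rewrite pow_rcons_step !rev_cat IH Hw /=.
rewrite -pow_rcons_step /= rcons_cat //.
Qed.

Lemma head_rev (T : Type) (X : T) u : head X (rev u) = last X u.
Proof. by case/lastP: u => [|u y] //; rewrite rev_rcons last_rcons. Qed.

Lemma last_rev (T : Type) (X : T) u : last X (rev u) = head X u.
Proof. by case: u => [|y u] //; rewrite rev_cons last_rcons. Qed.

Lemma pal_core (T : eqType) (X : T) a b u
  (IHf : forall l1 l2 : seq T, size l1 < size (nseq a X ++ u ++ nseq b X) ->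
         (forall w, peel l1 w <-> peel l2 w) -> l1 = l2 \/ l1 = rev l2)
  (hab : a < b) (hu : head X u != X) (hl : last X u != X)
  (Peq : forall w, peel (nseq a X ++ u ++ nseq b X) w <-> peel (nseq a X ++ rev u ++ nseq b X) w) :
  rev u = u.
Proof.
have hu' : head X (rev u) != X by rewrite head_rev.
have E1 : forall v, peel (behead u ++ nseq b X) v ->
    head X u = head X (rev u) /\ peel (behead (rev u) ++ nseq b X) v.
  move=> v H; have := peel_prefix_r a hu H; rewrite Peq => H'.
  have [_ [? ?]] := peel_prefix hu' (leqnn a) hab hu H'; by split.
have E2 : forall v, peel (behead (rev u) ++ nseq b X) v -> peel (behead u ++ nseq b X) v.
  move=> v H; have := peel_prefix_r a hu' H; rewrite -Peq => H'.
  by have [_ [? ?]] := peel_prefix hu (leqnn a) hab hu' H'.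
have Hh : head X u = head X (rev u) := (E1 _ (peel_refl _)).1.
have Eq : forall v, peel (behead u ++ nseq b X) v <-> peel (behead (rev u) ++ nseq b X) v.
  by move=> v; split; [move/E1 => [] | move/E2].
have Hs : size (behead u ++ nseq b X) < size (nseq a X ++ u ++ nseq b X).
  rewrite !size_cat !size_nseq size_behead; case: u hu {hl Peq hu' E1 E2 Hh Eq IHf} => [|??] /=; [by rewrite eqxx | lia].
have Hu : u = head X u :: behead u by case: u hu {IHf hl Peq hu' E1 E2 Hh Eq Hs} => //=; rewrite eqxx.
have Hru : rev u = head X u :: behead (rev u).
  rewrite Hh; case: (rev u) hu' => //= ; by rewrite eqxx.
case: (IHf _ _ Hs Eq) => E.
  by rewrite Hru -(catIs_ E) -Hu.
rewrite rev_cat rev_nseq in E.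
set p := rev (behead (rev u)) in E.
have Hup : u = rcons p (head X u) by rewrite /p -rev_cons -Hru revK.
have hb : 0 < b by lia.
have hy : head X u != X by [].
have Ecomm : p ++ (head X u :: nseq b X) = (head X u :: nseq b X) ++ p.
  by rewrite -cat_rcons -Hup {1}Hu /= E.
have [k Ek] := comm_pow hb hy Ecomm.
by rewrite Hup Ek pow_pal // rev_nseq.
Qed.

Lemma decomp (T : eqType) (X : T) l : exists a u b,
  l = nseq a X ++ u ++ nseq b X /\ (u = [::] \/ (head X u != X /\ last X u != X)).
Proof.
move: (leqnn (size l)); move: {2}(size l) => n; elim: n l => [|n IH] l Hl.
  by case: l Hl => // _; exists 0, [::], 0; split => //; left.
case: l Hl => [|x l0] Hl; first by exists 0, [::], 0; split => //; left.
case: (eqVneq x X) => [->|hx].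
  have [a [u [b [E H]]]] := IH l0 Hl.
  by exists a.+1, u, b; rewrite E.
case: (eqVneq (last x l0) X) => hl.
  have [l1 E1] : exists l1, x :: l0 = rcons l1 X.
    by exists (belast x l0); rewrite lastI hl.
  have Hs : size l1 <= n by move: Hl; rewrite E1 size_rcons.
  have [a [u [b [E H]]]] := IH l1 Hs.
  exists a, u, b.+1; split => //; by rewrite E1 E nseqSr -!rcons_cat.
exists 0, (x :: l0), 0; split; first by rewrite /= cats0.
by right; split.
Qed.

Lemma finish (T : eqType) (X : T) a b u u2
  (IHf : forall l1 l2 : seq T, size l1 < size (nseq a X ++ u ++ nseq b X) ->
         (forall w, peel l1 w <-> peel l2 w) -> l1 = l2 \/ l1 = rev l2)
  (hu : head X u != X) (hl : last X u != X)
  (Hu : u = u2 \/ u = rev u2)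
  (Peq : forall w, peel (nseq a X ++ u ++ nseq b X) w <-> peel (nseq a X ++ u2 ++ nseq b X) w) :
  nseq a X ++ u ++ nseq b X = nseq a X ++ u2 ++ nseq b X \/
  nseq a X ++ u ++ nseq b X = rev (nseq a X ++ u2 ++ nseq b X).
Proof.
case: Hu => [<-|Hu]; first by left.
have E2 : u2 = rev u by rewrite Hu revK.
rewrite E2 in Peq *.
case: (ltngtP a b) => Hab.
- by left; rewrite (pal_core IHf Hab hu hl Peq).
- have hu' : head X (rev u) != X by rewrite head_rev.
  have hl' : last X (rev u) != X by rewrite last_rev.
  have IHf' : forall l1 l2 : seq T, size l1 < size (nseq b X ++ rev u ++ nseq a X) ->
         (forall w, peel l1 w <-> peel l2 w) -> l1 = l2 \/ l1 = rev l2.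
    move=> l1 l2 Hs; apply: IHf; move: Hs; rewrite !size_cat !size_nseq size_rev; lia.
  have Peq' : forall w, peel (nseq b X ++ rev u ++ nseq a X) w <->
                        peel (nseq b X ++ rev (rev u) ++ nseq a X) w.
    move=> w; rewrite revK.
    have -> : nseq b X ++ rev u ++ nseq a X = rev (nseq a X ++ u ++ nseq b X)
      by rewrite !rev_cat !rev_nseq catA.
    have -> : nseq b X ++ u ++ nseq a X = rev (nseq a X ++ rev u ++ nseq b X)
      by rewrite !rev_cat !rev_nseq revK catA.
    by rewrite !peel_rev_iff.
  have := pal_core IHf' Hab hu' hl' Peq'; rewrite revK => <-.
  by left.
- by right; rewrite Hab !rev_cat !rev_nseq revK catA.
Qed.

Lemma step (T : eqType) (l l' : seq T)
  (IHf : forall l1 l2 : seq T, size l1 < size l ->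
         (forall w, peel l1 w <-> peel l2 w) -> l1 = l2 \/ l1 = rev l2)
  (Peq : forall w, peel l w <-> peel l' w) : l = l' \/ l = rev l'.
Proof.
case: l IHf Peq => [|X l0] IHf Peq.
  by left; have := (Peq [::]).1 peel_nil; move/peel_nil_inv => ->.
have [a0 [u [b [El0 Hu]]]] := decomp X l0.
have El : X :: l0 = nseq a0.+1 X ++ u ++ nseq b X by rewrite El0.
rewrite El in IHf Peq *; set a := a0.+1.
case: Hu => [Hu0|[hu hl]].
  rewrite Hu0 cat0s -nseqD in Peq *.
  by left; have H := (Peq l').2 (peel_refl l'); rewrite (peel_nseq H).
have [a' [u' [b' [El' Hu']]]] := decomp X l'.
rewrite El' in Peq *.
case: Hu' => [Hu0'|[hu' hl']].
  rewrite Hu0' cat0s -nseqD in Peq *.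
  by left; have H := (Peq _).1 (peel_refl _); rewrite (peel_nseq H).
have Hk : a + b = a' + b'.
  apply/eqP; rewrite eqn_leq; apply/andP; split.
    apply: (peel_kmax (v := u) hu' hl'); apply/Peq; apply: peel_outer_r; exact: peel_refl.
  apply: (peel_kmax (v := u') hu hl); apply/Peq; apply: peel_outer_r; exact: peel_refl.
have Pu : forall v, peel u v <-> peel u' v.
  move=> v; split=> H.
    have := peel_outer_r X a b H; rewrite Peq Hk => H'; exact: (peel_outer hu' hl' (erefl (a' + b')) H').
  have := peel_outer_r X a' b' H; rewrite -Peq -Hk => H'; exact: (peel_outer hu hl (erefl (a + b)) H').
have Hm : minn a b = minn a' b'.
  apply/eqP; rewrite eqn_leq; apply/andP; split.
    have [y [v [hy H]]] := peel_minwit a' b' hu' hl'.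
    apply: (peel_min hu hl hy); apply/Peq; exact: H.
  have [y [v [hy H]]] := peel_minwit a b hu hl.
  apply: (peel_min hu' hl' hy); apply/Peq; exact: H.
have Hsu : size u < size (nseq a X ++ u ++ nseq b X) by rewrite !size_cat size_nseq /a; lia.
have IHu := IHf u u' Hsu Pu.
have [[Ea Eb]|[Ea Eb]] : (a' = a /\ b' = b) \/ (a' = b /\ b' = a) by lia.
  rewrite Ea Eb in Peq *; exact: finish IHf hu hl IHu Peq.
have Peq2 : forall w, peel (nseq a X ++ u ++ nseq b X) w <-> peel (nseq a X ++ rev u' ++ nseq b X) w.
  move=> w; rewrite Peq -peel_rev_iff !rev_cat !rev_nseq Ea Eb catA //.
have IHu2 : u = rev u' \/ u = rev (rev u') by rewrite revK; case: IHu; [right|left].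
case: (finish IHf hu hl IHu2 Peq2) => E; [right|left]; rewrite E.
  by rewrite !rev_cat !rev_nseq Ea Eb catA.
by rewrite !rev_cat !rev_nseq revK Ea Eb catA.
Qed.

Theorem comb (T : eqType) (l l' : seq T) :
  (forall w, peel l w <-> peel l' w) -> l = l' \/ l = rev l'.
Proof.
move: (leqnn (size l)); move: {2}(size l) => n; elim: n l l' => [|n IH] l l' Hl Peq.
  by apply: step Peq => l1 l2 Hs; lia.
by apply: step Peq => l1 l2 Hs; apply: IH; lia.
Qed.

Definition sq (m : nat) (S : Type) (s : 'I_m -> S) : seq S := map s (enum 'I_m).

Lemma sq_inj m (S : Type) (s s' : 'I_m -> S) : sq s = sq s' -> s = s'.
Proof.
move/eq_in_map => H; apply: functional_extensionality => i.
by apply: H; rewrite mem_enum.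
Qed.

Lemma sq_rev m (S : Type) (s : 'I_m -> S) : sq (rev_seq s) = rev (sq s).
Proof.
case: m s => [|n] s; first by rewrite /sq enum_ord0.
apply: (@eq_from_nth _ (s ord0)); first by rewrite size_rev !size_map.
rewrite size_map size_enum_ord => i Hi.
rewrite /sq nth_rev; last by rewrite size_map size_enum_ord.
rewrite size_map size_enum_ord (nth_map ord0); last by rewrite size_enum_ord.
rewrite (nth_map ord0); last by rewrite size_enum_ord; lia.
rewrite /rev_seq; congr s; apply: val_inj; rewrite /= !nth_enum_ord //; lia.
Qed.

Lemma V_shape n (sigma : {perm 'I_n}) : in_T sigma ->
  forall i j l : 'I_n, i < j -> j < l -> sigma j < sigma i \/ sigma j < sigma l.
Proof.
case=> t [_ Hd Hi] i j l Hij Hjl.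
case: (leqP j t) => Hjt; first by left; exact: Hd.
by right; apply: Hi => //; exact: ltnW.
Qed.

Lemma iota_split x m : x < m -> iota 0 m = iota 0 x ++ x :: iota x.+1 (m - x.+1).
Proof.
move=> Hx; rewrite {1}(_ : m = x + (m - x.+1).+1); last lia.
by rewrite iotaD add0n.
Qed.

Lemma filter_split_l (P : pred nat) x m : x < m -> ~~ P x ->
  (forall i, i < m -> P i -> x < i) ->
  filter (fun i => P i || (i == x)) (iota 0 m) = x :: filter P (iota 0 m).
Proof.
move=> Hx Px H; rewrite (iota_split Hx) !filter_cat /= eqxx orbT (negbTE Px).
have E1 : forall Q : pred nat, (forall i, i < x -> ~~ Q i) -> filter Q (iota 0 x) = [::].
  move=> Q HQ; rewrite (eq_in_filter (a2 := pred0)); first exact: filter_pred0.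
  move=> i; rewrite mem_iota add0n /= => Hi; apply/negbTE; exact: HQ.
rewrite !E1 //=.
- congr cons; apply: eq_in_filter => i; rewrite mem_iota => /andP [Hi _].
  by rewrite (_ : (i == x) = false) ?orbF //; apply/eqP; lia.
- move=> i Hi; apply/negP => Pi; have := H i ltac:(lia) Pi; lia.
- move=> i Hi; rewrite negb_or; apply/andP; split; last by apply/eqP; lia.
  apply/negP => Pi; have := H i ltac:(lia) Pi; lia.
Qed.

Lemma filter_split_r (P : pred nat) x m : x < m -> ~~ P x ->
  (forall i, i < m -> P i -> i < x) ->
  filter (fun i => P i || (i == x)) (iota 0 m) = rcons (filter P (iota 0 m)) x.
Proof.
move=> Hx Px H; rewrite (iota_split Hx) !filter_cat /= eqxx orbT (negbTE Px).
have E1 : forall Q : pred nat, (forall i, x < i -> i < m -> ~~ Q i) -> filter Q (iota x.+1 (m - x.+1)) = [::].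
  move=> Q HQ; rewrite (eq_in_filter (a2 := pred0)); first exact: filter_pred0.
  move=> i; rewrite mem_iota /= => /andP [Hi Hi']; apply/negbTE; apply: HQ; lia.
rewrite !E1 ?cats0 -?cats1.
- congr cat; apply: eq_in_filter => i; rewrite mem_iota => /andP [_ Hi].
  by rewrite (_ : (i == x) = false) ?orbF //; apply/eqP; lia.
- move=> i Hi Him; apply/negP => Pi; have := H i Him Pi; lia.
- move=> i Hi Him; rewrite negb_or; apply/andP; split; last by apply/eqP; lia.
  apply/negP => Pi; have := H i Him Pi; lia.
Qed.

Lemma sound n (S : Type) (s : 'I_n.+1 -> S) (sigma : {perm 'I_n.+1}) :
  in_T sigma -> peel (sq s) (rev (sq (act_seq sigma s))).
Proof.
move=> HT.
set m := n.+1.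
pose f := fun i : nat => s (inord i).
pose tau := fun k : nat => (sigma^-1)%g (inord k) : 'I_m.
have Esq : sq s = map f (iota 0 m).
  by rewrite /sq -val_enum_ord -map_comp; apply: eq_map => i /=; rewrite /f inord_val.
have Eact : sq (act_seq sigma s) = map (fun j => s (tau j)) (iota 0 m).
  by rewrite /sq -val_enum_ord -map_comp; apply: eq_map => i /=; rewrite /tau /act_seq inord_val.
pose W := fun k => map f (filter (fun i => nat_of_ord (sigma (inord i)) < k) (iota 0 m)).
pose A := fun k => map (fun j => s (tau j)) (iota 0 k).
have Claim : forall k, k <= m -> peel (W k) (rev (A k)).
  elim=> [|k IH] Hk.
    rewrite /W /A /= (eq_in_filter (a2 := pred0)) ?filter_pred0 //=; first exact: peel_nil.
  have IH' := IH (ltnW Hk).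
  have EA : A k.+1 = rcons (A k) (s (tau k)) by rewrite /A -addn1 iotaD map_cat cats1.
  set x := tau k; set xn := nat_of_ord x.
  have Hx : sigma x = inord k by rewrite /x /tau permKV.
  have Hkm : k < m by [].
  have Hpred : forall i, i \in iota 0 m ->
      (nat_of_ord (sigma (inord i)) < k.+1) = (nat_of_ord (sigma (inord i)) < k) || (i == xn).
    move=> i; rewrite mem_iota add0n => /andP [_ Hi].
    rewrite ltnS leq_eqVlt orbC; congr orb.
    apply/eqP/eqP => [E|->].
      have E1 : sigma (inord i) = inord k by apply: val_inj; rewrite /= E inordK.
      have E2 : inord i = x by rewrite /x /tau -E1 permK.
      by rewrite /xn -E2 inordK.
    by rewrite /xn inord_val Hx inordK.
  pose P := fun i : nat => nat_of_ord (sigma (inord i)) < k.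
  have PxF : ~~ P xn by rewrite /P /xn inord_val Hx inordK // ltnn.
  have Hxm : xn < m by exact: ltn_ord.
  have EW : W k.+1 = map f (filter (fun i => P i || (i == xn)) (iota 0 m)).
    by rewrite /W; congr map; apply: eq_in_filter.
  have Hconv : (forall i, i < m -> P i -> xn < i) \/ (forall i, i < m -> P i -> i < xn).
    case: (boolP (has (fun i => P i && (i < xn)) (iota 0 m))) => H.
      right => j Hj Pj.
      case/hasP: H => i; rewrite mem_iota add0n => /andP [_ Him] /andP [Pi Hix].
      rewrite ltnNge leq_eqVlt negb_or; apply/andP; split.
        by apply/eqP => Ej; rewrite Ej Pj in PxF.
      apply/negP => Hxj.
      have Hi1 : (inord i : 'I_m) < x by rewrite inordK.
      have Hj1 : x < (inord j : 'I_m) by rewrite inordK.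
      case: (V_shape HT Hi1 Hj1); rewrite Hx inordK //; rewrite /P in Pi Pj; lia.
    left => j Hj Pj.
    rewrite ltn_neqAle; apply/andP; split.
      by apply/eqP => Ej; rewrite Ej Pj in PxF.
    rewrite leqNgt; apply/negP => Hjx.
    move/negP: H; apply; apply/hasP; exists j; first by rewrite mem_iota; lia.
    by rewrite Pj Hjx.
  have Efx : f xn = s x by rewrite /f /xn inord_val.
  rewrite EA rev_rcons.
  case: Hconv => Hc.
    rewrite EW (filter_split_l Hxm PxF Hc) /= Efx; constructor; exact: IH'.
  rewrite EW (filter_split_r Hxm PxF Hc) map_rcons Efx; constructor; exact: IH'.
have := Claim m (leqnn m).
rewrite Esq Eact /W /A (eq_in_filter (a2 := predT)) ?filter_predT //.
by move=> i; rewrite mem_iota add0n => /andP [_ Hi] /=; exact: ltn_ord.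
Qed.

Lemma peel_lift (A B : Type) (f : A -> B) L W : peel L W ->
  forall l, L = map f l -> exists wl, peel l wl /\ W = map f wl.
Proof.
elim=> [|x L0 W0 _ IH|x L0 W0 _ IH] l.
- by case: l => // _; exists [::]; split => //; exact: peel_nil.
- case: l => [|y l0] //= [Ex EL].
  have [wl [H1 H2]] := IH _ EL.
  by exists (y :: wl); split; [constructor | rewrite Ex H2].
- case/lastP: l => [|l0 y]; first by case: L0 {IH}.
  rewrite map_rcons => E; have [EL Ex] := (rcons_inj E).
  have [wl [H1 H2]] := IH _ EL.
  by exists (y :: wl); split; [constructor | rewrite Ex H2].
Qed.

Lemma peel_perm (T : eqType) (l w : seq T) : peel l w -> perm_eq l w.
Proof.
elim=> [|x l0 w0 _ IH|x l0 w0 _ IH] //; first by rewrite perm_cons.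
by rewrite perm_rcons perm_cons.
Qed.

Lemma peel_size T (l w : seq T) : peel l w -> size w = size l.
Proof. by elim=> [|x l0 w0 _ IH|x l0 w0 _ IH] //=; rewrite ?size_rcons IH. Qed.

Lemma index_rcons_in (T : eqType) (r : seq T) x y : y \in r -> index y (rcons r x) = index y r.
Proof. by move=> H; rewrite -cats1 index_cat H. Qed.

Lemma index_rcons_last (T : eqType) (r : seq T) x : x \notin r -> index x (rcons r x) = size r.
Proof. by move=> H; rewrite -cats1 index_cat (negbTE H) /= eqxx addn0. Qed.

Lemma peel_order N (x0 : 'I_N) (l w : seq 'I_N) : peel l w ->
  sorted (fun i j : 'I_N => i < j) l -> l != [::] ->
  (forall i j, i \in l -> j \in l -> i < j -> j <= nth x0 (rev w) 0 ->
     index j (rev w) < index i (rev w)) /\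
  (forall i j, i \in l -> j \in l -> nth x0 (rev w) 0 <= i -> i < j ->
     index i (rev w) < index j (rev w)).
Proof.
have ltT : transitive (fun i j : 'I_N => i < j) by move=> ? ? ? /ltn_trans; apply.
elim=> [|x l0 w0 H IH|x l0 w0 H IH] Hs _ //.
- have Hmin : forall y, y \in l0 -> x < y.
    move=> y Hy; have : sorted (fun i j : 'I_N => i < j) [:: x; y].
      apply: (subseq_sorted ltT _ Hs); rewrite -[_ :: _]/([:: x] ++ [:: y]) -[x :: l0]/([:: x] ++ l0).
      by apply: cat_subseq; rewrite ?sub1seq ?mem_head.
    by rewrite /= andbT.
  have Hs0 : sorted (fun i j : 'I_N => i < j) l0 := subseq_sorted ltT (subseq_cons l0 x) Hs.
  case: (eqVneq l0 [::]) => [E0|Hl0].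
    rewrite E0 in H *; have Ew0 : w0 = [::] by move: (peel_size H); case: (w0).
    by split => i j; rewrite !inE => /eqP -> /eqP ->; rewrite ltnn.
  have [IH1 IH2] := IH Hs0 Hl0.
  have Hp := peel_perm H.
  have Hw0 : w0 != [::] by apply: contraNneq Hl0 => E; move: (peel_size H); rewrite E; by case: (l0).
  have memw : forall y, (y \in rev w0) = (y \in l0) by move=> y; rewrite mem_rev (perm_mem Hp).
  have xn : x \notin rev w0 by rewrite memw; apply/negP => /Hmin; rewrite ltnn.
  have Et : nth x0 (rev (x :: w0)) 0 = nth x0 (rev w0) 0.
    by rewrite rev_cons nth_rcons size_rev lt0n size_eq0 Hw0.
  have tin : nth x0 (rev w0) 0 \in l0 by rewrite (perm_mem Hp) -mem_rev mem_nth // size_rev lt0n size_eq0.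
  rewrite Et rev_cons; split => i j; rewrite !inE.
  + case/orP => [/eqP ->|Hi]; case/orP => [/eqP ->|Hj]; rewrite ?ltnn // => Hij Hjt.
    * by rewrite index_rcons_last // index_rcons_in ?memw // index_mem memw.
    * by have := Hmin _ Hi; lia.
    * by rewrite !index_rcons_in ?memw //; apply: IH1.
  + case/orP => [/eqP ->|Hi]; case/orP => [/eqP ->|Hj]; rewrite ?ltnn // => Hti Hij.
    * by have := Hmin _ tin; lia.
    * by have := Hmin _ Hi; lia.
    * by rewrite !index_rcons_in ?memw //; apply: IH2.
- have Hmax : forall y, y \in l0 -> y < x.
    move=> y Hy; have : sorted (fun i j : 'I_N => i < j) [:: y; x].
      apply: (subseq_sorted ltT _ Hs); rewrite -[_ :: _]/([:: y] ++ [:: x]) -cats1.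
      by apply: cat_subseq; rewrite ?sub1seq ?mem_head.
    by rewrite /= andbT.
  have Hs0 : sorted (fun i j : 'I_N => i < j) l0 := subseq_sorted ltT (subseq_rcons l0 x) Hs.
  case: (eqVneq l0 [::]) => [E0|Hl0].
    rewrite E0 in H *; have Ew0 : w0 = [::] by move: (peel_size H); case: (w0).
    by split => i j; rewrite !inE => /eqP -> /eqP ->; rewrite ltnn.
  have [IH1 IH2] := IH Hs0 Hl0.
  have Hp := peel_perm H.
  have Hw0 : w0 != [::] by apply: contraNneq Hl0 => E; move: (peel_size H); rewrite E; by case: (l0).
  have memw : forall y, (y \in rev w0) = (y \in l0) by move=> y; rewrite mem_rev (perm_mem Hp).
  have xn : x \notin rev w0 by rewrite memw; apply/negP => /Hmax; rewrite ltnn.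
  have Et : nth x0 (rev (x :: w0)) 0 = nth x0 (rev w0) 0.
    by rewrite rev_cons nth_rcons size_rev lt0n size_eq0 Hw0.
  have tin : nth x0 (rev w0) 0 \in l0 by rewrite (perm_mem Hp) -mem_rev mem_nth // size_rev lt0n size_eq0.
  rewrite Et rev_cons; split => i j; rewrite !mem_rcons !inE.
  + case/orP => [/eqP ->|Hi]; case/orP => [/eqP ->|Hj]; rewrite ?ltnn // => Hij Hjt.
    * by have := Hmax _ Hj; lia.
    * by have := Hmax _ tin; lia.
    * by rewrite !index_rcons_in ?memw //; apply: IH1.
  + case/orP => [/eqP ->|Hi]; case/orP => [/eqP ->|Hj]; rewrite ?ltnn // => Hti Hij.
    * by have := Hmax _ Hj; lia.
    * by rewrite index_rcons_last // index_rcons_in ?memw // index_mem memw.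
    * by rewrite !index_rcons_in ?memw //; apply: IH2.
Qed.

Lemma complete n (S : Type) (s : 'I_n.+1 -> S) w : peel (sq s) w ->
  exists sigma, in_T sigma /\ rev (sq (act_seq sigma s)) = w.
Proof.
move=> Hp.
have [wl [Hpl Ew]] := peel_lift Hp (erefl (sq s)).
have Hperm := peel_perm Hpl.
have Hu : uniq wl by rewrite -(perm_uniq Hperm) enum_uniq.
have Hsz : size wl = n.+1 by rewrite -(perm_size Hperm) size_enum_ord.
set r := rev wl.
have Hur : uniq r by rewrite rev_uniq.
have Hszr : size r = n.+1 by rewrite size_rev.
pose g := fun j : 'I_n.+1 => nth ord0 r j.
have ginj : injective g.
  move=> i j /eqP; rewrite /g nth_uniq ?Hszr // => /eqP; exact: val_inj.
pose pi := perm ginj.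
exists (pi^-1)%g; split.
- have key : forall i, nat_of_ord ((pi^-1)%g i) = index i r.
    move=> i; have E : g ((pi^-1)%g i) = i by rewrite -[g _]permE permKV.
    by rewrite -{2}E /g index_uniq ?Hszr.
  have Hsorted : sorted (fun i j : 'I_n.+1 => i < j) (enum 'I_n.+1).
    by have := iota_ltn_sorted 0 n.+1; rewrite -val_enum_ord sorted_map.
  have Hne : enum 'I_n.+1 != [::] by rewrite -size_eq0 size_enum_ord.
  have [P1 P2] := peel_order ord0 Hpl Hsorted Hne.
  exists (g ord0); split.
  + by rewrite -[g _]permE permK.
  + move=> i j Hij Hjt; rewrite !key; apply: P1; rewrite ?mem_enum //.
  + move=> i j Hti Hij; rewrite !key; apply: P2; rewrite ?mem_enum //.
- have Eact : act_seq (pi^-1)%g s = fun i => s (g i).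
    by apply: functional_extensionality => i; rewrite /act_seq invgK permE.
  have Emap : map g (enum 'I_n.+1) = r.
    rewrite -[RHS](mkseq_nth ord0) Hszr /mkseq -val_enum_ord -map_comp.
    by apply: eq_map.
  by rewrite Eact /sq (map_comp s g) Emap map_rev /r revK Ew.
Qed.

Unset Implicit Arguments.
Theorem mainTheorem17 (S : finType) (hS : #|S| = 2) (m : nat)
  (s s' : 'I_m -> S) :
  mirrored s s' -> s = s' \/ s = rev_seq s'.
Proof.
case: m s s' => [|n] s s' Hm.
  by left; apply: functional_extensionality => -[].
have Peq : forall w, peel (sq s) w <-> peel (sq s') w.
  move=> w; split => H.
    have [sg [HT E]] := complete H.
    have [sg' [HT' E']] := Hm.1 sg HT.
    by rewrite -E E'; exact: sound.
  have [sg [HT E]] := complete H.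
  have [sg' [HT' E']] := Hm.2 sg HT.
  by rewrite -E E'; exact: sound.
case: (comb Peq) => E; [left | right]; apply: sq_inj => //.
by rewrite sq_rev.
Qed.
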